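(* Let $H=(v_1,\dots,v_6)$ be an embedded equilateral hexagon in standard position whose action-angle coordinates $(d_1,d_2,d_3,\theta_1,\theta_2,\theta_3)$ for the $T_{135}$ triangulation are defined, and let $d=\sqrt{2d_1^2d_2^2+2d_1^2d_3^2+2d_2^2d_3^2-d_1^4-d_2^4-d_3^4}$. If $J(H)=(1,1)$, then the following nine quantities are all positive: \begin{align*} f_1= & d_2\sqrt{4-d_2^2}\sin\theta_2\big(d_3d-(d_1^2-d_2^2+d_3^2)\sqrt{4-d_3^2}\cos\theta_3\big)- d_3\sqrt{4-d_3^2}\sin\theta_3\big(d_2d-(d_1^2+d_2^2-d_3^2)\sqrt{4-d_2^2}\cos\theta_2\big),\\ g_1= & \sqrt{4-d_2^2}\Big(\tfrac{-d_1^2+d_2^2+d_3^2}{2d_2 d_3}\cos\theta_2\sin\theta_3+\sin\theta_2\cos\theta_3\Big)-\tfrac{d\sin\theta_3}{2d_3},\\ h_1= & \sqrt{4-d_3^2}\Big(\tfrac{-d_1^2+d_2^2+d_3^2}{2d_2 d_3}\cos\theta_3\sin\theta_2+\sin\theta_3\cos\theta_2\Big)-\tfrac{d\sin\theta_2}{2d_2},\\ f_2 = & d_3\sqrt{4-d_3^2}\sin\theta_3\big(d_1d-(d_1^2+d_2^2-d_3^2)\sqrt{4-d_1^2}\cos\theta_1\big)- d_1\sqrt{4-d_1^2}\sin\theta_1\big(d_3d-(-d_1^2+d_2^2+d_3^2)\sqrt{4-d_3^2}\cos\theta_3\big),\\ g_2 = &\sqrt{4-d_3^2}\Big(\tfrac{d_1^2-d_2^2+d_3^2}{2d_1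 d_3}\cos\theta_3\sin\theta_1+\sin\theta_3\cos\theta_1\Big)-\tfrac{d\sin\theta_1}{2d_1},\\ h_2 = &\sqrt{4-d_1^2}\Big(\tfrac{d_1^2-d_2^2+d_3^2}{2d_1 d_3}\cos\theta_1\sin\theta_3+\sin\theta_1\cos\theta_3\Big)-\tfrac{d\sin\theta_3}{2d_3},\\ f_3 = & d_1\sqrt{4-d_1^2}\sin\theta_1\big(d_2d-(-d_1^2+d_2^2+d_3^2)\sqrt{4-d_2^2}\cos\theta_2\big)-d_2\sqrt{4-d_2^2}\sin\theta_2\big(d_1d-(d_1^2-d_2^2+d_3^2)\sqrt{4-d_1^2}\cos\theta_1\big),\\ g_3 = &\sqrt{4-d_1^2}\Big(\tfrac{d_1^2+d_2^2-d_3^2}{2d_1 d_2}\cos\theta_1\sin\theta_2+\sin\theta_1\cos\theta_2\Big)-\tfrac{d\sin\theta_2}{2d_2},\\ h_3 = &\sqrt{4-d_2^2}\Big( \tfrac{d_1^2+d_2^2-d_3^2}{2d_1 d_2}\cos\theta_2\sin\theta_1+\sin\theta_2\cos\theta_1\Big)-\tfrac{d\sin\theta_1}{2d_1}. \end{align*}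
   Context: An equilateral hexagon is an ordered 6-tuple $H=(v_1,\dots,v_6)$ in $\mathbb{R}^3$ with $\|v_i-v_{i+1}\|=1$ (indices mod 6), edges $e_i=[v_i,v_{i+1}]$, oriented $v_1\to v_2\to\cdots\to v_6\to v_1$; embedded means non-adjacent edges are disjoint and adjacent ones meet only at their common endpoint. Standard position: $v_1=0$, $v_3$ on the positive $x$-axis, $v_5$ in the $xy$-plane with positive $y$-coordinate. Action-angle coordinates ($T_{135}$ triangulation), defined when $v_1,v_3,v_5$ are not collinear and $0<d_i<2$: $d_1=\|v_3-v_1\|$, $d_2=\|v_5-v_3\|$, $d_3=\|v_1-v_5\|$; with $m_1,m_2,m_3$ the midpoints of $[v_1,v_3],[v_3,v_5],[v_5,v_1]$, $u_1,u_2,u_3$ the unit vectors in the $xy$-plane perpendicular to these segments pointing toward the opposite vertex of triangle $v_1v_3v_5$ (toward $v_5,v_1,v_3$ respectively), and $e_z=(0,0,1)$, the angles $\theta_i\in[0,2\pi)$ are determined by $v_{2i}=m_i+\tfrac12\sqrt{4-d_i^2}(\cos\theta_i\,u_i+\sin\theta_i\,e_z)$ (regular planar hexagon: all $\theta_i=\pi$). Explicitly $v_3=(d_1,0,0)$, $v_5=\big(\tfrac{d_1^2-d_2^2+d_3^2}{2d_1},\tfrac{d}{2d_1},0\big)$, $v_2=\big(\tfrac{d_1}{2},\tfrac12\sqrt{4-d_1^2}\cos\theta_1,\tfrac12\sqrt{4-d_1^2}\sin\theta_1\big)$. Joint Chirality-Curl: $curl(H)=\operatorname{sign}\big((v_3-v_1)\times(v_5-v_1)\cdot(v_2-v_1)\big)$.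 For $i=2,4,6$, $T_i$ is the open triangular disk with vertices $v_{i-1},v_i,v_{i+1}$, oriented by the right-hand rule (normal $(v_i-v_{i-1})\times(v_{i+1}-v_i)$), and $\Delta_i$ is the algebraic intersection number of $T_i$ with the oriented polygon $H$. Then $J(H)=(\Delta_2\Delta_4\Delta_6,\ \Delta_2^2\Delta_4^2\Delta_6^2\,curl(H))$. *)

(* Defs.v *)
From Stdlib Require Import Reals Lra Lia ZArith Classical ClassicalEpsilon.
Open Scope R_scope.

Record pt := Pt { px : R; py : R; pz : R }.

Definition vadd (a b : pt) : pt := Pt (px a + px b) (py a + py b) (pz a + pz b).
Definition vsub (a b : pt) : pt := Pt (px a - px b) (py a - py b) (pz a - pz b).
Definition vscal (k : R) (a : pt) : pt := Pt (k * px a) (k * py a) (k * pz a).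
Definition dot (a b : pt) : R := px a * px b + py a * py b + pz a * pz b.
Definition cross (a b : pt) : pt :=
  Pt (py a * pz b - pz a * py b) (pz a * px b - px a * pz b) (px a * py b - py a * px b).
Definition vnorm (a : pt) : R := sqrt (dot a a).
Definition pdist (a b : pt) : R := vnorm (vsub a b).
Definition ez : pt := Pt 0 0 1.
Definition origin : pt := Pt 0 0 0.

Definition on_seg (a b p : pt) : Prop :=
  exists t, 0 <= t <= 1 /\ p = vadd a (vscal t (vsub b a)).

Definition in_open_tri (a b c p : pt) : Prop :=
  exists s t, 0 < s /\ 0 < t /\ s + t < 1 /\
    p = vadd a (vadd (vscal s (vsub b a)) (vscal t (vsub c a))).

Definition collinear (a b c : pt) : Prop :=
  cross (vsub b a) (vsub c a) = origin.

(** Hexagons: ordered 6-tuples; vertex index i is taken mod 6, with v_6 = v_0. *)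
Record hexagon := Hex { h1 : pt; h2 : pt; h3 : pt; h4 : pt; h5 : pt; h6 : pt }.

Definition vert (H : hexagon) (i : nat) : pt :=
  match Nat.modulo i 6 with
  | 1%nat => h1 H | 2%nat => h2 H | 3%nat => h3 H
  | 4%nat => h4 H | 5%nat => h5 H | _ => h6 H
  end.

Definition equilateral (H : hexagon) : Prop :=
  forall i : nat, (1 <= i <= 6)%nat -> pdist (vert H i) (vert H (S i)) = 1.

(** Edge e_i = [v_i, v_{i+1}].  Embedded: non-adjacent edges disjoint,
    adjacent edges meet only at the common endpoint. *)
Definition on_edge (H : hexagon) (i : nat) (p : pt) : Prop :=
  on_seg (vert H i) (vert H (S i)) p.

Definition embedded (H : hexagon) : Prop :=
  (forall i j : nat, (1 <= i <= 6)%nat -> (1 <= j <= 6)%nat ->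
     let k := Nat.modulo (j + 6 - i) 6 in
     (k = 2 \/ k = 3 \/ k = 4)%nat ->
     ~ exists p, on_edge H i p /\ on_edge H j p)
  /\
  (forall i : nat, (1 <= i <= 6)%nat ->
     forall p, on_edge H i p -> on_edge H (S i) p -> p = vert H (S i)).

Definition standard_position (H : hexagon) : Prop :=
  h1 H = origin /\
  py (h3 H) = 0 /\ pz (h3 H) = 0 /\ 0 < px (h3 H) /\
  pz (h5 H) = 0 /\ 0 < py (h5 H).

Definition perp_toward (a b c : pt) : pt :=
  let w := vsub (vsub c a)
             (vscal (dot (vsub c a) (vsub b a) / dot (vsub b a) (vsub b a)) (vsub b a)) in
  vscal (/ vnorm w) w.

Definition midpoint (a b : pt) : pt := vscal (1/2) (vadd a b).

(** The defining relation of the angle theta_i: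
    v_{2i} = m_i + 1/2 sqrt(4 - d_i^2) (cos theta u_i + sin theta e_z),
    where segment [a,b] has midpoint m_i and opposite vertex c. *)
Definition angle_rel (a b c v : pt) (th : R) : Prop :=
  let di := pdist b a in
  v = vadd (midpoint a b)
        (vscal (/2 * sqrt (4 - di ^ 2))
           (vadd (vscal (cos th) (perp_toward a b c)) (vscal (sin th) ez))).

Definition sgnZ (x : R) : Z :=
  if Rlt_dec 0 x then 1%Z else if Rlt_dec x 0 then (-1)%Z else 0%Z.

Definition curl (H : hexagon) : Z :=
  sgnZ (dot (cross (vsub (h3 H) (h1 H)) (vsub (h5 H) (h1 H))) (vsub (h2 H) (h1 H))).

Definition bool_of (P : Prop) : bool :=
  if excluded_middle_informative P then true else false.

(** Signed contribution of the oriented segment [a,b] to the algebraic intersection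
    number with the open triangle (p0,p1,p2), oriented by n = (p1-p0) x (p2-p1).
    Heights ha, hb relative to the plane; a crossing point is counted +1 when
    ha < 0 <= hb and -1 when hb < 0 <= ha (half-open convention, so that a
    vertex lying in the triangle is counted once, and tangential touches count 0),
    provided the crossing point lies in the open triangle. *)
Definition seg_tri_sign (p0 p1 p2 a b : pt) : Z :=
  let n := cross (vsub p1 p0) (vsub p2 p1) in
  let ha := dot n (vsub a p1) in
  let hb := dot n (vsub b p1) in
  let q := vadd a (vscal (ha / (ha - hb)) (vsub b a)) in
  if bool_of (in_open_tri p0 p1 p2 q) then
    (if Rlt_dec ha 0 then (if Rle_dec 0 hb then 1%Z else 0%Z)
     else if Rlt_dec hb 0 then (if Rle_dec 0 ha then (-1)%Z else 0%Z)
     else 0%Z)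
  else 0%Z.

(** Delta_i : algebraic intersection number of T_i (vertices v_{i-1}, v_i, v_{i+1})
    with the oriented hexagon (sum over its six oriented edges). *)
Definition Delta (H : hexagon) (i : nat) : Z :=
  let p0 := vert H (i + 5) in
  let p1 := vert H i in
  let p2 := vert H (S i) in
  (seg_tri_sign p0 p1 p2 (h1 H) (h2 H) + seg_tri_sign p0 p1 p2 (h2 H) (h3 H) +
   seg_tri_sign p0 p1 p2 (h3 H) (h4 H) + seg_tri_sign p0 p1 p2 (h4 H) (h5 H) +
   seg_tri_sign p0 p1 p2 (h5 H) (h6 H) + seg_tri_sign p0 p1 p2 (h6 H) (h1 H))%Z.

Definition JCC (H : hexagon) : Z * Z :=
  let D2 := Delta H 2 in let D4 := Delta H 4 in let D6 := Delta H 6 in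
  ((D2 * D4 * D6)%Z, (D2 ^ 2 * D4 ^ 2 * D6 ^ 2 * curl H)%Z).

Definition dd (d1 d2 d3 : R) : R :=
  sqrt (2 * d1^2 * d2^2 + 2 * d1^2 * d3^2 + 2 * d2^2 * d3^2 - d1^4 - d2^4 - d3^4).


Definition f1 (d1 d2 d3 t1 t2 t3 : R) : R :=
  let d := dd d1 d2 d3 in let s1 := sqrt (4 - d1^2) in
  let s2 := sqrt (4 - d2^2) in let s3 := sqrt (4 - d3^2) in
  d2 * s2 * sin t2 * (d3 * d - (d1^2 - d2^2 + d3^2) * s3 * cos t3)
  - d3 * s3 * sin t3 * (d2 * d - (d1^2 + d2^2 - d3^2) * s2 * cos t2).
Definition g1 (d1 d2 d3 t1 t2 t3 : R) : R :=
  let d := dd d1 d2 d3 in let s1 := sqrt (4 - d1^2) in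
  let s2 := sqrt (4 - d2^2) in let s3 := sqrt (4 - d3^2) in
  s2 * ((- d1^2 + d2^2 + d3^2) / (2 * d2 * d3) * cos t2 * sin t3 + sin t2 * cos t3)
  - d * sin t3 / (2 * d3).
Definition hh1 (d1 d2 d3 t1 t2 t3 : R) : R :=
  let d := dd d1 d2 d3 in let s1 := sqrt (4 - d1^2) in
  let s2 := sqrt (4 - d2^2) in let s3 := sqrt (4 - d3^2) in
  s3 * ((- d1^2 + d2^2 + d3^2) / (2 * d2 * d3) * cos t3 * sin t2 + sin t3 * cos t2)
  - d * sin t2 / (2 * d2).
Definition f2 (d1 d2 d3 t1 t2 t3 : R) : R :=
  let d := dd d1 d2 d3 in let s1 := sqrt (4 - d1^2) in
  let s2 := sqrt (4 - d2^2) in let s3 := sqrt (4 - d3^2) in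
  d3 * s3 * sin t3 * (d1 * d - (d1^2 + d2^2 - d3^2) * s1 * cos t1)
  - d1 * s1 * sin t1 * (d3 * d - (- d1^2 + d2^2 + d3^2) * s3 * cos t3).
Definition g2 (d1 d2 d3 t1 t2 t3 : R) : R :=
  let d := dd d1 d2 d3 in let s1 := sqrt (4 - d1^2) in
  let s2 := sqrt (4 - d2^2) in let s3 := sqrt (4 - d3^2) in
  s3 * ((d1^2 - d2^2 + d3^2) / (2 * d1 * d3) * cos t3 * sin t1 + sin t3 * cos t1)
  - d * sin t1 / (2 * d1).
Definition hh2 (d1 d2 d3 t1 t2 t3 : R) : R :=
  let d := dd d1 d2 d3 in let s1 := sqrt (4 - d1^2) in
  let s2 := sqrt (4 - d2^2) in let s3 := sqrt (4 - d3^2) in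
  s1 * ((d1^2 - d2^2 + d3^2) / (2 * d1 * d3) * cos t1 * sin t3 + sin t1 * cos t3)
  - d * sin t3 / (2 * d3).
Definition f3 (d1 d2 d3 t1 t2 t3 : R) : R :=
  let d := dd d1 d2 d3 in let s1 := sqrt (4 - d1^2) in
  let s2 := sqrt (4 - d2^2) in let s3 := sqrt (4 - d3^2) in
  d1 * s1 * sin t1 * (d2 * d - (- d1^2 + d2^2 + d3^2) * s2 * cos t2)
  - d2 * s2 * sin t2 * (d1 * d - (d1^2 - d2^2 + d3^2) * s1 * cos t1).
Definition g3 (d1 d2 d3 t1 t2 t3 : R) : R :=
  let d := dd d1 d2 d3 in let s1 := sqrt (4 - d1^2) in
  let s2 := sqrt (4 - d2^2) in let s3 := sqrt (4 - d3^2) in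
  s1 * ((d1^2 + d2^2 - d3^2) / (2 * d1 * d2) * cos t1 * sin t2 + sin t1 * cos t2)
  - d * sin t2 / (2 * d2).
Definition hh3 (d1 d2 d3 t1 t2 t3 : R) : R :=
  let d := dd d1 d2 d3 in let s1 := sqrt (4 - d1^2) in
  let s2 := sqrt (4 - d2^2) in let s3 := sqrt (4 - d3^2) in
  s2 * ((d1^2 + d2^2 - d3^2) / (2 * d1 * d2) * cos t2 * sin t1 + sin t2 * cos t1)
  - d * sin t1 / (2 * d1).

(* Main.v *)
Require Import Defs.
From Stdlib Require Import Reals ZArith Lra Lia Psatz Classical ClassicalEpsilon.
Open Scope R_scope.

Definition O4 (A B C X : pt) : R := dot (cross (vsub B A) (vsub C A)) (vsub X A).

Lemma hgt_eq P0 P1 P2 X : dot (cross (vsub P1 P0) (vsub P2 P1)) (vsub X P1) = O4 P0 P1 P2 X.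
Proof. destruct P0, P1, P2, X; unfold O4, dot, cross, vsub; simpl; ring. Qed.

Definition Veq (P0 P1 P2 a b : pt) (lam s t : R) : Prop :=
  vadd a (vscal lam (vsub b a)) = vadd P0 (vadd (vscal s (vsub P1 P0)) (vscal t (vsub P2 P0))).

Lemma I1 P0 P1 P2 a b lam s t : Veq P0 P1 P2 a b lam s t ->
  O4 P0 P1 a b = t * (O4 P0 P1 P2 b - O4 P0 P1 P2 a).
Proof.
  unfold Veq. intro H.
  assert (K : forall q, q = vadd a (vscal lam (vsub b a)) -> O4 P0 P1 a b =
     dot (cross (vsub P1 P0) (vsub q P0)) (vsub b P0) + dot (cross (vsub P1 P0) (vsub a P0)) (vsub q P0)).
  { intros q ->. destruct P0, P1, a, b; unfold O4, dot, cross, vsub, vadd, vscal; simpl; ring. }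
  rewrite (K _ (eq_sym H)). destruct P0, P1, P2, a, b; unfold O4, dot, cross, vsub, vadd, vscal; simpl; ring.
Qed.

Lemma I2 P0 P1 P2 a b lam s t : Veq P0 P1 P2 a b lam s t ->
  O4 a b P1 P2 = (1 - s - t) * (O4 P0 P1 P2 b - O4 P0 P1 P2 a).
Proof.
  unfold Veq. intro H.
  assert (K : forall q, q = vadd a (vscal lam (vsub b a)) -> O4 a b P1 P2 = O4 q b P1 P2 + O4 a q P1 P2).
  { intros q ->. destruct P1, P2, a, b; unfold O4, dot, cross, vsub, vadd, vscal; simpl; ring. }
  rewrite (K _ (eq_sym H)). destruct P0, P1, P2, a, b; unfold O4, dot, cross, vsub, vadd, vscal; simpl; ring.
Qed.

Lemma Vz P0 P1 P2 a b lam s t : Veq P0 P1 P2 a b lam s t ->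
  pz a + lam * (pz b - pz a) = pz P0 + (s * (pz P1 - pz P0) + t * (pz P2 - pz P0)).
Proof. unfold Veq; intro H. apply (f_equal pz) in H. destruct P0, P1, P2, a, b; simpl in *; lra. Qed.

Lemma sts_cases P0 P1 P2 a b :
  (seg_tri_sign P0 P1 P2 a b = 1%Z /\
     in_open_tri P0 P1 P2 (vadd a (vscal (O4 P0 P1 P2 a / (O4 P0 P1 P2 a - O4 P0 P1 P2 b)) (vsub b a)))
     /\ O4 P0 P1 P2 a < 0 /\ 0 <= O4 P0 P1 P2 b) \/
  (seg_tri_sign P0 P1 P2 a b = (-1)%Z /\
     in_open_tri P0 P1 P2 (vadd a (vscal (O4 P0 P1 P2 a / (O4 P0 P1 P2 a - O4 P0 P1 P2 b)) (vsub b a)))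
     /\ 0 <= O4 P0 P1 P2 a /\ O4 P0 P1 P2 b < 0) \/
  seg_tri_sign P0 P1 P2 a b = 0%Z.
Proof.
  unfold seg_tri_sign. cbv zeta. rewrite !hgt_eq. unfold bool_of.
  destruct (excluded_middle_informative _) as [Hin|Hin];
  destruct (Rlt_dec (O4 P0 P1 P2 a) 0); destruct (Rle_dec 0 (O4 P0 P1 P2 b));
  destruct (Rlt_dec (O4 P0 P1 P2 b) 0); destruct (Rle_dec 0 (O4 P0 P1 P2 a));
  try (left; repeat split; auto; lra); try (right; left; repeat split; auto; lra);
  right; right; reflexivity.
Qed.
Lemma intri_Veq P0 P1 P2 a b lam : in_open_tri P0 P1 P2 (vadd a (vscal lam (vsub b a))) ->
  exists s t, 0 < s /\ 0 < t /\ s + t < 1 /\ Veq P0 P1 P2 a b lam s t.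
Proof. intros [s [t [Hs [Ht [Hst He]]]]]. exists s, t. unfold Veq. auto. Qed.

Lemma sts_pos P0 P1 P2 a b : seg_tri_sign P0 P1 P2 a b = 1%Z ->
  exists lam s t, 0 < s /\ 0 < t /\ s + t < 1 /\ 0 < lam <= 1 /\
   (0 < O4 P0 P1 P2 b -> lam < 1) /\ Veq P0 P1 P2 a b lam s t /\
   O4 P0 P1 P2 a < 0 /\ 0 <= O4 P0 P1 P2 b /\ 0 < O4 P0 P1 a b /\ 0 < O4 a b P1 P2.
Proof.
  intro H1. destruct (sts_cases P0 P1 P2 a b) as [[_ [Hin [Ha Hb]]]|[[Hc _]|Hc]];
    [| rewrite H1 in Hc; discriminate | rewrite H1 in Hc; discriminate].
  set (ha := O4 P0 P1 P2 a) in *. set (hb := O4 P0 P1 P2 b) in *.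
  destruct (intri_Veq _ _ _ _ _ _ Hin) as [s [t [Hs [Ht [Hst HV]]]]].
  exists (ha / (ha - hb)), s, t.
  pose proof (I1 _ _ _ _ _ _ _ _ HV) as E1. pose proof (I2 _ _ _ _ _ _ _ _ HV) as E2.
  fold ha hb in E1, E2.
  assert (Hd : ha - hb < 0) by lra.
  assert (L1 : 0 < ha / (ha - hb)).
  { unfold Rdiv. replace (ha * / (ha - hb)) with ((- ha) * / (- (ha - hb))) by (field; lra).
    apply Rmult_lt_0_compat; [lra| apply Rinv_0_lt_compat; lra]. }
  assert (L2 : ha / (ha - hb) <= 1).
  { apply (Rmult_le_reg_r (- (ha - hb))); [lra|].
    replace (ha / (ha - hb) * - (ha - hb)) with (- ha) by (field; lra). lra. }
  assert (L3 : 0 < hb -> ha / (ha - hb) < 1).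
  { intro. apply (Rmult_lt_reg_r (- (ha - hb))); [lra|].
    replace (ha / (ha - hb) * - (ha - hb)) with (- ha) by (field; lra). lra. }
  repeat split; auto; try lra.
  - rewrite E1. apply Rmult_lt_0_compat; lra.
  - rewrite E2. apply Rmult_lt_0_compat; lra.
Qed.

Lemma sts_neg P0 P1 P2 a b : seg_tri_sign P0 P1 P2 a b = (-1)%Z ->
  exists lam s t, 0 < s /\ 0 < t /\ s + t < 1 /\ 0 <= lam < 1 /\
   (0 < O4 P0 P1 P2 a -> 0 < lam) /\ Veq P0 P1 P2 a b lam s t /\
   0 <= O4 P0 P1 P2 a /\ O4 P0 P1 P2 b < 0 /\ O4 P0 P1 a b < 0 /\ O4 a b P1 P2 < 0.
Proof.
  intro H1. destruct (sts_cases P0 P1 P2 a b) as [[Hc _]|[[_ [Hin [Ha Hb]]]|Hc]];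
    [rewrite H1 in Hc; discriminate | | rewrite H1 in Hc; discriminate].
  set (ha := O4 P0 P1 P2 a) in *. set (hb := O4 P0 P1 P2 b) in *.
  destruct (intri_Veq _ _ _ _ _ _ Hin) as [s [t [Hs [Ht [Hst HV]]]]].
  exists (ha / (ha - hb)), s, t.
  pose proof (I1 _ _ _ _ _ _ _ _ HV) as E1. pose proof (I2 _ _ _ _ _ _ _ _ HV) as E2.
  fold ha hb in E1, E2.
  assert (Hd : 0 < ha - hb) by lra.
  assert (L1 : 0 <= ha / (ha - hb)).
  { unfold Rdiv. apply Rmult_le_pos; [lra| left; apply Rinv_0_lt_compat; lra]. }
  assert (L2 : ha / (ha - hb) < 1).
  { apply (Rmult_lt_reg_r (ha - hb)); [lra|].
    replace (ha / (ha - hb) * (ha - hb)) with ha by (field; lra). lra. }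
  assert (L3 : 0 < ha -> 0 < ha / (ha - hb)).
  { intro. unfold Rdiv. apply Rmult_lt_0_compat; [lra| apply Rinv_0_lt_compat; lra]. }
  repeat split; auto; try lra.
  - rewrite E1. assert (0 < t * (ha - hb)) by (apply Rmult_lt_0_compat; lra). lra.
  - rewrite E2. assert (0 < (1 - s - t) * (ha - hb)) by (apply Rmult_lt_0_compat; lra). lra.
Qed.

Lemma intri_P0 P0 P1 P2 : in_open_tri P0 P1 P2 P0 -> forall X, O4 P0 P1 P2 X = 0.
Proof.
  intros [s [t [Hs [Ht [Hst He]]]]] X.
  destruct P0 as [a0 b0 c0], P1 as [a1 b1 c1], P2 as [a2 b2 c2], X as [x y z].
  unfold vadd, vscal, vsub in He. injection He. intros Ez Ey Ex.
  apply (Rmult_eq_reg_l s); [|lra]. rewrite Rmult_0_r.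
  assert (Fx : s * (a1 - a0) + t * (a2 - a0) = 0) by lra.
  assert (Fy : s * (b1 - b0) + t * (b2 - b0) = 0) by lra.
  assert (Fz : s * (c1 - c0) + t * (c2 - c0) = 0) by lra.
  assert (K : s * O4 (Pt a0 b0 c0) (Pt a1 b1 c1) (Pt a2 b2 c2) (Pt x y z) =
    dot (cross (Pt (s * (a1 - a0) + t * (a2 - a0)) (s * (b1 - b0) + t * (b2 - b0)) (s * (c1 - c0) + t * (c2 - c0)))
      (Pt (a2 - a0) (b2 - b0) (c2 - c0))) (Pt (x - a0) (y - b0) (z - c0)))
   by (unfold O4, dot, cross, vsub; simpl; ring).
  rewrite K, Fx, Fy, Fz. unfold dot, cross; simpl; ring.
Qed.

Lemma intri_P2 P0 P1 P2 : in_open_tri P0 P1 P2 P2 -> forall X, O4 P0 P1 P2 X = 0.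
Proof.
  intros [s [t [Hs [Ht [Hst He]]]]] X.
  destruct P0 as [a0 b0 c0], P1 as [a1 b1 c1], P2 as [a2 b2 c2], X as [x y z].
  unfold vadd, vscal, vsub in He. injection He. intros Ez Ey Ex.
  apply (Rmult_eq_reg_l s); [|lra]. rewrite Rmult_0_r.
  assert (Fx : s * (a1 - a0) + (t - 1) * (a2 - a0) = 0) by lra.
  assert (Fy : s * (b1 - b0) + (t - 1) * (b2 - b0) = 0) by lra.
  assert (Fz : s * (c1 - c0) + (t - 1) * (c2 - c0) = 0) by lra.
  assert (K : s * O4 (Pt a0 b0 c0) (Pt a1 b1 c1) (Pt a2 b2 c2) (Pt x y z) =
    dot (cross (Pt (s * (a1 - a0) + (t - 1) * (a2 - a0)) (s * (b1 - b0) + (t - 1) * (b2 - b0)) (s * (c1 - c0) + (t - 1) * (c2 - c0)))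
      (Pt (a2 - a0) (b2 - b0) (c2 - c0))) (Pt (x - a0) (y - b0) (z - c0)))
   by (unfold O4, dot, cross, vsub; simpl; ring).
  rewrite K, Fx, Fy, Fz. unfold dot, cross; simpl; ring.
Qed.

Lemma O4_P0 P0 P1 P2 : O4 P0 P1 P2 P0 = 0.
Proof. destruct P0, P1, P2; unfold O4, dot, cross, vsub; simpl; ring. Qed.
Lemma O4_P1 P0 P1 P2 : O4 P0 P1 P2 P1 = 0.
Proof. destruct P0, P1, P2; unfold O4, dot, cross, vsub; simpl; ring. Qed.
Lemma O4_P2 P0 P1 P2 : O4 P0 P1 P2 P2 = 0.
Proof. destruct P0, P1, P2; unfold O4, dot, cross, vsub; simpl; ring. Qed.

Lemma adj01 P0 P1 P2 : seg_tri_sign P0 P1 P2 P0 P1 = 0%Z.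
Proof.
  destruct (sts_cases P0 P1 P2 P0 P1) as [[_ [_ [Ha _]]]|[[_ [_ [_ Hb]]]|Hc]]; auto;
  rewrite ?O4_P0, ?O4_P1 in *; lra.
Qed.
Lemma adj12 P0 P1 P2 : seg_tri_sign P0 P1 P2 P1 P2 = 0%Z.
Proof.
  destruct (sts_cases P0 P1 P2 P1 P2) as [[_ [_ [Ha _]]]|[[_ [_ [_ Hb]]]|Hc]]; auto;
  rewrite ?O4_P1, ?O4_P2 in *; lra.
Qed.
Lemma adj2A P0 P1 P2 A : seg_tri_sign P0 P1 P2 P2 A = 0%Z.
Proof.
  destruct (sts_cases P0 P1 P2 P2 A) as [[_ [_ [Ha _]]]|[[_ [Hin [_ Hb]]]|Hc]]; auto.
  - rewrite O4_P2 in Ha; lra.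
  - exfalso. rewrite O4_P2 in Hin.
    replace (vadd P2 (vscal (0 / (0 - O4 P0 P1 P2 A)) (vsub A P2))) with P2 in Hin.
    + pose proof (intri_P2 _ _ _ Hin A). lra.
    + destruct P2, A; unfold vadd, vscal, vsub; simpl; f_equal; unfold Rdiv; ring.
Qed.
Lemma adjC0 P0 P1 P2 C : seg_tri_sign P0 P1 P2 C P0 = 0%Z.
Proof.
  destruct (sts_cases P0 P1 P2 C P0) as [[_ [Hin [Ha _]]]|[[_ [_ [_ Hb]]]|Hc]]; auto.
  - exfalso. rewrite O4_P0 in Hin.
    replace (vadd C (vscal (O4 P0 P1 P2 C / (O4 P0 P1 P2 C - 0)) (vsub P0 C))) with P0 in Hin.
    + pose proof (intri_P0 _ _ _ Hin C). lra.
    + destruct P0, C; unfold vadd, vscal, vsub; simpl; f_equal; field; lra.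
  - rewrite O4_P0 in Hb; lra.
Qed.

Lemma Delta2_eq v1 v2 v3 v4 v5 v6 : Defs.Delta (Hex v1 v2 v3 v4 v5 v6) 2 =
  (seg_tri_sign v1 v2 v3 v4 v5 + seg_tri_sign v1 v2 v3 v5 v6)%Z.
Proof.
  change (Defs.Delta (Hex v1 v2 v3 v4 v5 v6) 2) with
   (seg_tri_sign v1 v2 v3 v1 v2 + seg_tri_sign v1 v2 v3 v2 v3 + seg_tri_sign v1 v2 v3 v3 v4 +
    seg_tri_sign v1 v2 v3 v4 v5 + seg_tri_sign v1 v2 v3 v5 v6 + seg_tri_sign v1 v2 v3 v6 v1)%Z.
  rewrite adj01, adj12, adj2A, adjC0. lia.
Qed.
Lemma Delta4_eq v1 v2 v3 v4 v5 v6 : Defs.Delta (Hex v1 v2 v3 v4 v5 v6) 4 =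
  (seg_tri_sign v3 v4 v5 v6 v1 + seg_tri_sign v3 v4 v5 v1 v2)%Z.
Proof.
  change (Defs.Delta (Hex v1 v2 v3 v4 v5 v6) 4) with
   (seg_tri_sign v3 v4 v5 v1 v2 + seg_tri_sign v3 v4 v5 v2 v3 + seg_tri_sign v3 v4 v5 v3 v4 +
    seg_tri_sign v3 v4 v5 v4 v5 + seg_tri_sign v3 v4 v5 v5 v6 + seg_tri_sign v3 v4 v5 v6 v1)%Z.
  rewrite adj01, adj12, adj2A, adjC0. lia.
Qed.
Lemma Delta6_eq v1 v2 v3 v4 v5 v6 : Defs.Delta (Hex v1 v2 v3 v4 v5 v6) 6 =
  (seg_tri_sign v5 v6 v1 v2 v3 + seg_tri_sign v5 v6 v1 v3 v4)%Z.
Proof.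
  change (Defs.Delta (Hex v1 v2 v3 v4 v5 v6) 6) with
   (seg_tri_sign v5 v6 v1 v1 v2 + seg_tri_sign v5 v6 v1 v2 v3 + seg_tri_sign v5 v6 v1 v3 v4 +
    seg_tri_sign v5 v6 v1 v4 v5 + seg_tri_sign v5 v6 v1 v5 v6 + seg_tri_sign v5 v6 v1 v6 v1)%Z.
  rewrite adj01, adj12, adj2A, adjC0. lia.
Qed.

Lemma sts_range P0 P1 P2 a b : seg_tri_sign P0 P1 P2 a b = 1%Z \/ seg_tri_sign P0 P1 P2 a b = (-1)%Z \/
  seg_tri_sign P0 P1 P2 a b = 0%Z.
Proof. destruct (sts_cases P0 P1 P2 a b) as [[H _]|[[H _]|H]]; auto. Qed.

Lemma combi (v2 v4 v6 : pt) (x3 x5 y5 : R) :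
  0 < x3 -> 0 < y5 -> 0 < pz v2 ->
  ((seg_tri_sign origin v2 (Pt x3 0 0) v4 (Pt x5 y5 0) + seg_tri_sign origin v2 (Pt x3 0 0) (Pt x5 y5 0) v6) *
   (seg_tri_sign (Pt x3 0 0) v4 (Pt x5 y5 0) v6 origin + seg_tri_sign (Pt x3 0 0) v4 (Pt x5 y5 0) origin v2) *
   (seg_tri_sign (Pt x5 y5 0) v6 origin v2 (Pt x3 0 0) + seg_tri_sign (Pt x5 y5 0) v6 origin (Pt x3 0 0) v4))%Z = 1%Z ->
  (O4 origin v2 (Pt x3 0 0) v4 < 0 /\ 0 < O4 origin v2 v4 (Pt x5 y5 0) /\ 0 < O4 v4 (Pt x5 y5 0) v2 (Pt x3 0 0)) /\
  (O4 (Pt x3 0 0) v4 (Pt x5 y5 0) v6 < 0 /\ 0 < O4 (Pt x3 0 0) v4 v6 origin /\ 0 < O4 v6 origin v4 (Pt x5 y5 0)) /\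
  (O4 (Pt x5 y5 0) v6 origin v2 < 0 /\ 0 < O4 (Pt x5 y5 0) v6 v2 (Pt x3 0 0) /\ 0 < O4 v2 (Pt x3 0 0) v6 origin).
Proof.
  intros Hx3 Hy5 Hz2 Hprod.
  set (v1 := origin) in *. set (v3 := Pt x3 0 0) in *. set (v5 := Pt x5 y5 0) in *.
  assert (K : 0 < x3 * y5) by (apply Rmult_lt_0_compat; lra).
  assert (Hh2 : O4 v1 v2 v3 v5 = x3 * y5 * pz v2) by (destruct v2; unfold O4, dot, cross, vsub, v1, v3, v5; simpl; ring).
  assert (Hh4 : O4 v3 v4 v5 v1 = x3 * y5 * pz v4) by (destruct v4; unfold O4, dot, cross, vsub, v1, v3, v5; simpl; ring).
  assert (Hh6 : O4 v5 v6 v1 v3 = x3 * y5 * pz v6) by (destruct v6; unfold O4, dot, cross, vsub, v1, v3, v5; simpl; ring).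
  assert (Hh2p : 0 < O4 v1 v2 v3 v5) by (rewrite Hh2; apply Rmult_lt_0_compat; lra).
  set (c24 := seg_tri_sign v1 v2 v3 v4 v5) in *.
  set (c25 := seg_tri_sign v1 v2 v3 v5 v6) in *.
  set (c46 := seg_tri_sign v3 v4 v5 v6 v1) in *.
  set (c41 := seg_tri_sign v3 v4 v5 v1 v2) in *.
  set (c62 := seg_tri_sign v5 v6 v1 v2 v3) in *.
  set (c63 := seg_tri_sign v5 v6 v1 v3 v4) in *.
  assert (N24 : c24 <> (-1)%Z).
  { intro E. destruct (sts_neg _ _ _ _ _ E) as [lam [s [t [_ [_ [_ [_ [_ [_ [_ [Hb _]]]]]]]]]]]. lra. }
  assert (P24 : c24 = 1%Z -> 0 < pz v4 /\ 0 < O4 v1 v2 v4 v5).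
  { intro E. destruct (sts_pos _ _ _ _ _ E) as [lam [s [t [Hs [Ht [Hst [Hl [Hl1 [HV [Ha [Hb [X1 X2]]]]]]]]]]]].
    pose proof (Vz _ _ _ _ _ _ _ _ HV) as Z. unfold v1, v3, v5 in Z; simpl in Z.
    specialize (Hl1 Hh2p). split; [|exact X1].
    assert (0 < s * pz v2) by (apply Rmult_lt_0_compat; lra). nra. }
  assert (N25 : c25 <> 1%Z).
  { intro E. destruct (sts_pos _ _ _ _ _ E) as [lam [s [t [_ [_ [_ [_ [_ [_ [Ha _]]]]]]]]]]. lra. }
  assert (P25 : c25 = (-1)%Z -> 0 < pz v6 /\ O4 v5 v6 v2 v3 < 0).
  { intro E. destruct (sts_neg _ _ _ _ _ E) as [lam [s [t [Hs [Ht [Hst [Hl [Hl1 [HV [Ha [Hb [X1 X2]]]]]]]]]]]].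
    pose proof (Vz _ _ _ _ _ _ _ _ HV) as Z. unfold v1, v3, v5 in Z; simpl in Z.
    specialize (Hl1 Hh2p). split; [|exact X2].
    assert (0 < s * pz v2) by (apply Rmult_lt_0_compat; lra). nra. }
  assert (M46 : c46 = (-1)%Z -> pz v4 < 0).
  { intro E. destruct (sts_neg _ _ _ _ _ E) as [lam [s [t [_ [_ [_ [_ [_ [_ [_ [Hb _]]]]]]]]]]].
    rewrite Hh4 in Hb. nra. }
  assert (P46 : c46 = 1%Z -> 0 < O4 v3 v4 v6 v1).
  { intro E. destruct (sts_pos _ _ _ _ _ E) as [lam [s [t [_ [_ [_ [_ [_ [_ [_ [_ [X1 _]]]]]]]]]]]]. exact X1. }
  assert (N41 : c41 <> 1%Z).
  { intro E. destruct (sts_pos _ _ _ _ _ E) as [lam [s [t [Hs [Ht [Hst [Hl [Hl1 [HV [Ha [Hb [X1 X2]]]]]]]]]]]].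
    pose proof (Vz _ _ _ _ _ _ _ _ HV) as Z. unfold v1, v3, v5 in Z; simpl in Z.
    rewrite Hh4 in Ha.
    assert (pz v4 < 0) by nra.
    assert (0 < lam * pz v2) by (apply Rmult_lt_0_compat; lra).
    assert (s * pz v4 < 0) by nra. nra. }
  assert (P41 : c41 = (-1)%Z -> O4 v1 v2 v4 v5 < 0).
  { intro E. destruct (sts_neg _ _ _ _ _ E) as [lam [s [t [_ [_ [_ [_ [_ [_ [_ [_ [_ X2]]]]]]]]]]]]. exact X2. }
  assert (N62 : c62 <> (-1)%Z).
  { intro E. destruct (sts_neg _ _ _ _ _ E) as [lam [s [t [Hs [Ht [Hst [Hl [Hl1 [HV [Ha [Hb [X1 X2]]]]]]]]]]]].
    pose proof (Vz _ _ _ _ _ _ _ _ HV) as Z. unfold v1, v3, v5 in Z; simpl in Z.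
    rewrite Hh6 in Hb.
    assert (pz v6 < 0) by nra.
    assert (0 < (1 - lam) * pz v2) by (apply Rmult_lt_0_compat; lra).
    assert (s * pz v6 < 0) by nra. nra. }
  assert (P62 : c62 = 1%Z -> 0 < O4 v5 v6 v2 v3).
  { intro E. destruct (sts_pos _ _ _ _ _ E) as [lam [s [t [_ [_ [_ [_ [_ [_ [_ [_ [X1 _]]]]]]]]]]]]. exact X1. }
  assert (M63 : c63 = 1%Z -> pz v6 < 0 /\ pz v4 < 0).
  { intro E. destruct (sts_pos _ _ _ _ _ E) as [lam [s [t [Hs [Ht [Hst [Hl [Hl1 [HV [Ha [Hb [X1 X2]]]]]]]]]]]].
    pose proof (Vz _ _ _ _ _ _ _ _ HV) as Z. unfold v1, v3, v5 in Z; simpl in Z.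
    rewrite Hh6 in Ha.
    assert (pz v6 < 0) by nra. split; [assumption|].
    assert (s * pz v6 < 0) by nra. nra. }
  assert (P63 : c63 = (-1)%Z -> O4 v3 v4 v6 v1 < 0).
  { intro E. destruct (sts_neg _ _ _ _ _ E) as [lam [s [t [_ [_ [_ [_ [_ [_ [_ [_ [_ X2]]]]]]]]]]]]. exact X2. }
  assert (X3 : ~ (c24 = 1%Z /\ c41 = (-1)%Z)).
  { intros [E1 E2]. specialize (P24 E1). specialize (P41 E2). lra. }
  assert (X2 : ~ (c62 = 1%Z /\ c25 = (-1)%Z)).
  { intros [E1 E2]. specialize (P62 E1). specialize (P25 E2). lra. }
  assert (X1 : ~ (c46 = 1%Z /\ c63 = (-1)%Z)).
  { intros [E1 E2]. specialize (P46 E1). specialize (P63 E2). lra. }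
  assert (Z1 : ~ (c24 = 1%Z /\ c46 = (-1)%Z)).
  { intros [E1 E2]. specialize (P24 E1). specialize (M46 E2). lra. }
  assert (Z2 : ~ (c24 = 1%Z /\ c63 = 1%Z)).
  { intros [E1 E2]. specialize (P24 E1). specialize (M63 E2). lra. }
  assert (Z3 : ~ (c25 = (-1)%Z /\ c63 = 1%Z)).
  { intros [E1 E2]. specialize (P25 E1). specialize (M63 E2). lra. }
  assert (Fin : c24 = 1%Z /\ c46 = 1%Z /\ c62 = 1%Z).
  { clear -N24 N25 N41 N62 X1 X2 X3 Z1 Z2 Z3 Hprod.
    destruct (sts_range v1 v2 v3 v4 v5) as [R24|[R24|R24]]; fold c24 in R24;
    destruct (sts_range v1 v2 v3 v5 v6) as [R25|[R25|R25]]; fold c25 in R25;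
    destruct (sts_range v3 v4 v5 v6 v1) as [R46|[R46|R46]]; fold c46 in R46;
    destruct (sts_range v3 v4 v5 v1 v2) as [R41|[R41|R41]]; fold c41 in R41;
    destruct (sts_range v5 v6 v1 v2 v3) as [R62|[R62|R62]]; fold c62 in R62;
    destruct (sts_range v5 v6 v1 v3 v4) as [R63|[R63|R63]]; fold c63 in R63;
    rewrite ?R24, ?R25, ?R46, ?R41, ?R62, ?R63 in *; try lia; tauto. }
  destruct Fin as [E24 [E46 E62]].
  destruct (sts_pos _ _ _ _ _ E24) as [? [? [? [_ [_ [_ [_ [_ [_ [A1 [_ [A2 A3]]]]]]]]]]]].
  destruct (sts_pos _ _ _ _ _ E46) as [? [? [? [_ [_ [_ [_ [_ [_ [B1 [_ [B2 B3]]]]]]]]]]]].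
  destruct (sts_pos _ _ _ _ _ E62) as [? [? [? [_ [_ [_ [_ [_ [_ [C1 [_ [C2 C3]]]]]]]]]]]].
  repeat split; assumption.
Qed.

Lemma perp_gen a b c w u k :
  vsub (vsub c a) (vscal (dot (vsub c a) (vsub b a) / dot (vsub b a) (vsub b a)) (vsub b a)) = w ->
  vnorm w = k -> vscal (/ k) w = u -> perp_toward a b c = u.
Proof. intros H1 H2 H3. unfold perp_toward. cbv zeta. rewrite H1, H2. exact H3. Qed.

Lemma vnorm_eq w k : 0 <= k -> dot w w = k * k -> vnorm w = k.
Proof. intros Hk H. unfold vnorm. rewrite H. apply sqrt_square. exact Hk. Qed.

Lemma perp1 x3 x5 y5 : 0 < x3 -> 0 < y5 ->
  perp_toward origin (Pt x3 0 0) (Pt x5 y5 0) = Pt 0 1 0.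
Proof.
  intros Hx Hy. apply (perp_gen _ _ _ (Pt 0 y5 0) _ y5).
  - unfold vsub, vscal, dot, origin; simpl. f_equal; field; lra.
  - apply vnorm_eq; [lra|]. unfold dot; simpl; ring.
  - unfold vscal; simpl. f_equal; field; lra.
Qed.

Lemma perp2 x3 x5 y5 d2 : 0 < x3 -> 0 < y5 -> 0 < d2 -> d2 * d2 = (x5 - x3) ^ 2 + y5 ^ 2 ->
  perp_toward (Pt x3 0 0) (Pt x5 y5 0) origin = Pt (- y5 / d2) ((x5 - x3) / d2) 0.
Proof.
  intros Hx Hy Hd Hsq.
  assert (HD : (x5 - x3) ^ 2 + y5 ^ 2 <> 0) by nra.
  apply (perp_gen _ _ _ (Pt (- (x3 * y5 * y5) / (d2 * d2)) (x3 * y5 * (x5 - x3) / (d2 * d2)) 0) _ (x3 * y5 / d2)).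
  - unfold vsub, vscal, dot, origin; simpl. rewrite Hsq. f_equal; field; nra.
  - apply vnorm_eq. { apply Rmult_le_pos; [nra| left; apply Rinv_0_lt_compat; lra]. }
    transitivity (x3 * x3 * y5 * y5 / (d2 * d2)).
    { unfold dot; simpl. rewrite Hsq. field. nra. }
    field. lra.
  - unfold vscal; simpl. f_equal; field; repeat split; lra.
Qed.

Lemma perp3 x3 x5 y5 d3 : 0 < x3 -> 0 < y5 -> 0 < d3 -> d3 * d3 = x5 ^ 2 + y5 ^ 2 ->
  perp_toward (Pt x5 y5 0) origin (Pt x3 0 0) = Pt (y5 / d3) (- x5 / d3) 0.
Proof.
  intros Hx Hy Hd Hsq.
  apply (perp_gen _ _ _ (Pt (x3 * y5 * y5 / (d3 * d3)) (- (x3 * y5 * x5) / (d3 * d3)) 0) _ (x3 * y5 / d3)).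
  - unfold vsub, vscal, dot, origin; simpl. rewrite Hsq. f_equal; field; nra.
  - apply vnorm_eq. { apply Rmult_le_pos; [nra| left; apply Rinv_0_lt_compat; lra]. }
    transitivity (x3 * x3 * y5 * y5 / (d3 * d3)).
    { unfold dot; simpl. rewrite Hsq. field. nra. }
    field. lra.
  - unfold vscal; simpl. f_equal; field; repeat split; lra.
Qed.

Section Idents.
Variables x3 x5 y5 d2 d3 t1 t2 t3 : R.
Hypotheses (Hx : 0 < x3) (Hy : 0 < y5) (Hd2 : 0 < d2) (Hd3 : 0 < d3)
  (Hsq2 : d2 ^ 2 = (x5 - x3) ^ 2 + y5 ^ 2) (Hsq3 : d3 ^ 2 = x5 ^ 2 + y5 ^ 2)
  (Hdd : dd x3 d2 d3 = 2 * x3 * y5)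
  (HS1 : 0 < sqrt (4 - x3 ^ 2)) (HS2 : 0 < sqrt (4 - d2 ^ 2)) (HS3 : 0 < sqrt (4 - d3 ^ 2)).
Let V2 := vadd (midpoint origin (Pt x3 0 0)) (vscal (/ 2 * sqrt (4 - x3 ^ 2))
    (vadd (vscal (cos t1) (Pt 0 1 0)) (vscal (sin t1) ez))).
Let V4 := vadd (midpoint (Pt x3 0 0) (Pt x5 y5 0)) (vscal (/ 2 * sqrt (4 - d2 ^ 2))
    (vadd (vscal (cos t2) (Pt (- y5 / d2) ((x5 - x3) / d2) 0)) (vscal (sin t2) ez))).
Let V6 := vadd (midpoint (Pt x5 y5 0) origin) (vscal (/ 2 * sqrt (4 - d3 ^ 2))
    (vadd (vscal (cos t3) (Pt (y5 / d3) (- x5 / d3) 0)) (vscal (sin t3) ez))).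

Ltac prep := unfold f1, f2, f3, g1, g2, g3, hh1, hh2, hh3; cbv zeta; rewrite Hdd;
  set (S1 := sqrt (4 - x3 ^ 2)) in *; set (S2 := sqrt (4 - d2 ^ 2)) in *; set (S3 := sqrt (4 - d3 ^ 2)) in *;
  rewrite ?Hsq2, ?Hsq3;
  unfold V2, V4, V6, O4, dot, cross, vsub, vadd, vscal, midpoint, ez, origin; simpl.

Lemma id_f3 : f3 x3 d2 d3 t1 t2 t3 = 8 * x3 * d2 * O4 origin V2 V4 (Pt x5 y5 0).
Proof. prep. field_simplify_eq; [rewrite ?Hsq2, ?Hsq3; ring | repeat split; lra]. Qed.
Lemma id_f1 : f1 x3 d2 d3 t1 t2 t3 = 8 * d2 * d3 * O4 (Pt x3 0 0) V4 V6 origin.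
Proof. prep. field_simplify_eq; [rewrite ?Hsq2, ?Hsq3; ring | repeat split; lra]. Qed.
Lemma id_f2 : f2 x3 d2 d3 t1 t2 t3 = 8 * d3 * x3 * O4 (Pt x5 y5 0) V6 V2 (Pt x3 0 0).
Proof. prep. field_simplify_eq; [rewrite ?Hsq2, ?Hsq3; ring | repeat split; lra]. Qed.
Lemma id_g3 : g3 x3 d2 d3 t1 t2 t3 * (d2 * sqrt (4 - d2 ^ 2)) = - (4) * O4 (Pt x3 0 0) V4 (Pt x5 y5 0) V2.
Proof. prep. field_simplify_eq; [rewrite ?Hsq2, ?Hsq3; ring | repeat split; lra]. Qed.
Lemma id_g1 : g1 x3 d2 d3 t1 t2 t3 * (d3 * sqrt (4 - d3 ^ 2)) = - (4) * O4 (Pt x5 y5 0) V6 origin V4.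
Proof. prep. field_simplify_eq; [rewrite ?Hsq2, ?Hsq3; ring | repeat split; lra]. Qed.
Lemma id_g2 : g2 x3 d2 d3 t1 t2 t3 * (x3 * sqrt (4 - x3 ^ 2)) = - (4) * O4 origin V2 (Pt x3 0 0) V6.
Proof. prep. field_simplify_eq; [rewrite ?Hsq2, ?Hsq3; ring | repeat split; lra]. Qed.
Lemma id_h3 : hh3 x3 d2 d3 t1 t2 t3 * (x3 * sqrt (4 - x3 ^ 2)) = - (4) * O4 origin V2 (Pt x3 0 0) V4.
Proof. prep. field_simplify_eq; [rewrite ?Hsq2, ?Hsq3; ring | repeat split; lra]. Qed.
Lemma id_h1 : hh1 x3 d2 d3 t1 t2 t3 * (d2 * sqrt (4 - d2 ^ 2)) = - (4) * O4 (Pt x3 0 0) V4 (Pt x5 y5 0) V6.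
Proof. prep. field_simplify_eq; [rewrite ?Hsq2, ?Hsq3; ring | repeat split; lra]. Qed.
Lemma id_h2 : hh2 x3 d2 d3 t1 t2 t3 * (d3 * sqrt (4 - d3 ^ 2)) = - (4) * O4 (Pt x5 y5 0) V6 origin V2.
Proof. prep. field_simplify_eq; [rewrite ?Hsq2, ?Hsq3; ring | repeat split; lra]. Qed.
End Idents.

Lemma pos_of_mul a b : 0 < a * b -> 0 < b -> 0 < a.
Proof. intros H Hb. destruct (Rle_or_lt a 0) as [Ha|Ha]; [|exact Ha]. nra. Qed.

Lemma O4_rot P0 P1 P2 P3 : O4 P0 P1 P2 P3 = - O4 P1 P2 P3 P0.
Proof. destruct P0, P1, P2, P3; unfold O4, dot, cross, vsub; simpl; ring. Qed.

Ltac rw3 H Ha1 Ha2 Ha3 := try rewrite <- Ha1 in H; try rewrite <- Ha2 in H; try rewrite <- Ha3 in H.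

Lemma O4_rot' P0 P1 P2 P3 : O4 P1 P2 P3 P0 = - O4 P0 P1 P2 P3.
Proof. destruct P0, P1, P2, P3; unfold O4, dot, cross, vsub; simpl; ring. Qed.

Lemma curl_one (A B C k : Z) : (A * B * C = 1)%Z ->
  (Z.pow_pos A 2 * Z.pow_pos B 2 * Z.pow_pos C 2 * k = 1)%Z -> k = 1%Z.
Proof.
  intros H1 H2. change (Z.pow_pos A 2) with (A ^ 2)%Z in H2.
  change (Z.pow_pos B 2) with (B ^ 2)%Z in H2. change (Z.pow_pos C 2) with (C ^ 2)%Z in H2.
  replace (A ^ 2 * B ^ 2 * C ^ 2 * k)%Z with ((A * B * C) ^ 2 * k)%Z in H2 by ring.
  rewrite H1 in H2. lia.
Qed.

Theorem mainTheorem4 (H : hexagon) (d1 d2 d3 t1 t2 t3 : R) :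
  equilateral H -> embedded H -> standard_position H ->
  ~ collinear (h1 H) (h3 H) (h5 H) ->
  d1 = pdist (h3 H) (h1 H) -> d2 = pdist (h5 H) (h3 H) -> d3 = pdist (h1 H) (h5 H) ->
  0 < d1 < 2 -> 0 < d2 < 2 -> 0 < d3 < 2 ->
  0 <= t1 < 2 * PI -> 0 <= t2 < 2 * PI -> 0 <= t3 < 2 * PI ->
  angle_rel (h1 H) (h3 H) (h5 H) (h2 H) t1 ->
  angle_rel (h3 H) (h5 H) (h1 H) (h4 H) t2 ->
  angle_rel (h5 H) (h1 H) (h3 H) (h6 H) t3 ->
  JCC H = (1%Z, 1%Z) ->
  0 < f1 d1 d2 d3 t1 t2 t3 /\ 0 < g1 d1 d2 d3 t1 t2 t3 /\ 0 < hh1 d1 d2 d3 t1 t2 t3 /\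
  0 < f2 d1 d2 d3 t1 t2 t3 /\ 0 < g2 d1 d2 d3 t1 t2 t3 /\ 0 < hh2 d1 d2 d3 t1 t2 t3 /\
  0 < f3 d1 d2 d3 t1 t2 t3 /\ 0 < g3 d1 d2 d3 t1 t2 t3 /\ 0 < hh3 d1 d2 d3 t1 t2 t3.
Proof.
  intros _ _ Hstd _ Hd1 Hd2 Hd3 Hd1r Hd2r Hd3r _ _ _ Ha1 Ha2 Ha3 HJ.
  destruct H as [v1 v2 v3 v4 v5 v6]. cbn [h1 h2 h3 h4 h5 h6] in *.
  unfold standard_position in Hstd. cbn [h1 h2 h3 h4 h5 h6] in Hstd.
  destruct Hstd as [E1 [Ey3 [Ez3 [Hx3 [Ez5 Hy5]]]]]. subst v1.
  destruct v3 as [x3 y3 z3]. destruct v5 as [x5 y5 z5]. cbn [px py pz] in Ey3, Ez3, Hx3, Ez5, Hy5.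
  subst y3 z3 z5.
  unfold angle_rel in Ha1, Ha2, Ha3. cbv zeta in Ha1, Ha2, Ha3.
  rewrite <- Hd1 in Ha1. rewrite <- Hd2 in Ha2. rewrite <- Hd3 in Ha3.
  assert (Ex3 : d1 = x3).
  { rewrite Hd1. unfold pdist, vnorm, dot, vsub, origin; simpl.
    replace ((x3 - 0) * (x3 - 0) + (0 - 0) * (0 - 0) + (0 - 0) * (0 - 0)) with (x3 * x3) by ring.
    apply sqrt_square. lra. }
  assert (Hsq2 : d2 ^ 2 = (x5 - x3) ^ 2 + y5 ^ 2).
  { rewrite Hd2. unfold pdist, vnorm, dot, vsub, origin; simpl.
    rewrite Rmult_1_r, sqrt_sqrt. { ring. }
    match goal with |- 0 <= ?a * ?a + ?b * ?b + ?c * ?c =>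
      pose proof (Rle_0_sqr a); pose proof (Rle_0_sqr b); pose proof (Rle_0_sqr c); unfold Rsqr in *; lra end. }
  assert (Hsq3 : d3 ^ 2 = x5 ^ 2 + y5 ^ 2).
  { rewrite Hd3. unfold pdist, vnorm, dot, vsub, origin; simpl.
    rewrite Rmult_1_r, sqrt_sqrt. { ring. }
    match goal with |- 0 <= ?a * ?a + ?b * ?b + ?c * ?c =>
      pose proof (Rle_0_sqr a); pose proof (Rle_0_sqr b); pose proof (Rle_0_sqr c); unfold Rsqr in *; lra end. }
  clear Hd1 Hd2 Hd3. subst d1.
  assert (Hdd : dd x3 d2 d3 = 2 * x3 * y5).
  { unfold dd. replace (d2 ^ 4) with ((d2 ^ 2) ^ 2) by ring. replace (d3 ^ 4) with ((d3 ^ 2) ^ 2) by ring.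
    rewrite Hsq2, Hsq3.
    replace (2 * x3 ^ 2 * ((x5 - x3) ^ 2 + y5 ^ 2) + 2 * x3 ^ 2 * (x5 ^ 2 + y5 ^ 2) +
      2 * ((x5 - x3) ^ 2 + y5 ^ 2) * (x5 ^ 2 + y5 ^ 2) - x3 ^ 4 - ((x5 - x3) ^ 2 + y5 ^ 2) ^ 2 -
      (x5 ^ 2 + y5 ^ 2) ^ 2) with ((2 * x3 * y5) ^ 2) by ring.
    apply sqrt_pow2. nra. }
  rewrite (perp1 x3 x5 y5) in Ha1 by lra.
  rewrite (perp2 x3 x5 y5 d2) in Ha2 by (try lra; rewrite <- Hsq2; ring).
  rewrite (perp3 x3 x5 y5 d3) in Ha3 by (try lra; rewrite <- Hsq3; ring).
  assert (HS1 : 0 < sqrt (4 - x3 ^ 2)) by (apply sqrt_lt_R0; nra).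
  assert (HS2 : 0 < sqrt (4 - d2 ^ 2)) by (apply sqrt_lt_R0; nra).
  assert (HS3 : 0 < sqrt (4 - d3 ^ 2)) by (apply sqrt_lt_R0; nra).
  unfold JCC in HJ. rewrite Delta2_eq, Delta4_eq, Delta6_eq in HJ.
  injection HJ as P1 P2.
  assert (Hc : curl (Hex origin v2 (Pt x3 0 0) v4 (Pt x5 y5 0) v6) = 1%Z).
  { revert P1 P2. generalize (curl (Hex origin v2 (Pt x3 0 0) v4 (Pt x5 y5 0) v6)). intros k P1 P2.
    exact (curl_one _ _ _ _ P1 P2). }
  assert (Hz2 : 0 < pz v2).
  { unfold curl, sgnZ in Hc. cbn [h1 h2 h3 h5] in Hc.
    destruct (Rlt_dec 0 _) as [Hp|Hp]; [|destruct (Rlt_dec _ 0); discriminate].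
    replace (dot (cross (vsub (Pt x3 0 0) origin) (vsub (Pt x5 y5 0) origin)) (vsub v2 origin))
      with (x3 * y5 * pz v2) in Hp by (destruct v2; unfold dot, cross, vsub, origin; simpl; ring).
    assert (0 < x3 * y5) by (apply Rmult_lt_0_compat; lra).
    rewrite Rmult_comm in Hp. apply (pos_of_mul _ _ Hp H). }
  destruct (combi v2 v4 v6 x3 x5 y5 ltac:(lra) ltac:(lra) Hz2 P1)
    as [[A1 [A2 A3]] [[B1 [B2 B3]] [C1 [C2 C3]]]].
  rewrite O4_rot' in A3, B3, C3.
  pose proof (id_f1 x3 x5 y5 d2 d3 t1 t2 t3) as F1.
  pose proof (id_f2 x3 x5 y5 d2 d3 t1 t2 t3) as F2.
  pose proof (id_f3 x3 x5 y5 d2 d3 t1 t2 t3) as F3.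
  pose proof (id_g1 x3 x5 y5 d2 d3 t1 t2 t3) as G1.
  pose proof (id_g2 x3 x5 y5 d2 d3 t1 t2 t3) as G2.
  pose proof (id_g3 x3 x5 y5 d2 d3 t1 t2 t3) as G3.
  pose proof (id_h1 x3 x5 y5 d2 d3 t1 t2 t3) as K1.
  pose proof (id_h2 x3 x5 y5 d2 d3 t1 t2 t3) as K2.
  pose proof (id_h3 x3 x5 y5 d2 d3 t1 t2 t3) as K3.
  repeat match goal with
  | Hf : ?P -> _ |- _ => match type of P with Prop => specialize (Hf ltac:(first [assumption | lra])) end
  end.
  rw3 F1 Ha1 Ha2 Ha3. rw3 F2 Ha1 Ha2 Ha3. rw3 F3 Ha1 Ha2 Ha3.
  rw3 G1 Ha1 Ha2 Ha3. rw3 G2 Ha1 Ha2 Ha3. rw3 G3 Ha1 Ha2 Ha3.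
  rw3 K1 Ha1 Ha2 Ha3. rw3 K2 Ha1 Ha2 Ha3. rw3 K3 Ha1 Ha2 Ha3.
  assert (Q1 : 0 < d2 * sqrt (4 - d2 ^ 2)) by (apply Rmult_lt_0_compat; lra).
  assert (Q2 : 0 < d3 * sqrt (4 - d3 ^ 2)) by (apply Rmult_lt_0_compat; lra).
  assert (Q3 : 0 < x3 * sqrt (4 - x3 ^ 2)) by (apply Rmult_lt_0_compat; lra).
  repeat split.
  - rewrite F1. apply Rmult_lt_0_compat; [|exact B2]. apply Rmult_lt_0_compat; lra.
  - apply (pos_of_mul _ _ ltac:(rewrite G1; lra) Q2).
  - apply (pos_of_mul _ _ ltac:(rewrite K1; lra) Q1).
  - rewrite F2. apply Rmult_lt_0_compat; [|exact C2]. apply Rmult_lt_0_compat; lra.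
  - apply (pos_of_mul _ _ ltac:(rewrite G2; lra) Q3).
  - apply (pos_of_mul _ _ ltac:(rewrite K2; lra) Q2).
  - rewrite F3. apply Rmult_lt_0_compat; [|exact A2]. apply Rmult_lt_0_compat; lra.
  - apply (pos_of_mul _ _ ltac:(rewrite G3; lra) Q1).
  - apply (pos_of_mul _ _ ltac:(rewrite K3; lra) Q3).
Qed.
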